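(* Let $T$ be a $\delta$-Jordan Lie supertriple system and $(V,\theta)$ a representation of $T$. Then $d^{3}d^{1}=0$ and $d^{4}d^{2}=0$; that is, $d^3(d^1f)=0$ for every homogeneous linear map $f:T\to V$, and $d^4(d^2 f)=0$ for every 2-cochain $f\in C^2_\delta(T,V)$.
   Context: A $\delta$-Jordan Lie supertriple system ($\delta\in\{1,-1\}$) is a $\mathbb{Z}_2$-graded vector space $T$ with a trilinear product $[\cdot,\cdot,\cdot]$ such that, for all homogeneous $a,b,c,d,e$ (with $|a|$ the degree of $a$): $|[a,b,c]|=|a|+|b|+|c|$; $[b,a,c]=-\delta(-1)^{|a||b|}[a,b,c]$; $(-1)^{|a||c|}[a,b,c]+(-1)^{|b||a|}[b,c,a]+(-1)^{|c||b|}[c,a,b]=0$; and $[a,b,[c,d,e]]=[[a,b,c],d,e]+(-1)^{|c|(|a|+|b|)}[c,[a,b,d],e]+\delta(-1)^{(|a|+|b|)(|c|+|d|)}[c,d,[a,b,e]]$. A representation is $(V,\theta)$, $V$ a $\mathbb{Z}_2$-graded space, $\theta:T\otimes T\to End(V)$ bilinear, such that with $D(a,b)=(-1)^{|a||b|}\theta(b,a)-\delta\theta(a,b)$, for homogeneous $a,b,c,d$: (R1) $(-1)^{(|a|+|b|)(|c|+|d|)}\theta(c,d)\theta(a,b)-\delta(-1)^{|a||b|+|d|(|c|+|a|)}\theta(b,d)\theta(a,c)-\theta(a,[b,c,d])+(-1)^{|a|(|b|+|c|)}D(b,c)\theta(a,d)=0$; (R2) $\delta(-1)^{(|a|+|b|)(|c|+|d|)}\theta(c,d)D(a,b)-\delta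 D(a,b)\theta(c,d)+\theta([a,b,c],d)+\delta(-1)^{|c|(|a|+|b|)}\theta(c,[a,b,d])=0$; (R3) $D([a,b,c],d)+(-1)^{|c|(|a|+|b|)}D(c,[a,b,d])-\delta D(a,b)D(c,d)+(-1)^{(|a|+|b|)(|c|+|d|)}D(c,d)D(a,b)=0$. A 2-cochain is a homogeneous bilinear map $f:T\times T\to V$ with $f(y,x)=-\delta(-1)^{|x||y|}f(x,y)$. For homogeneous multilinear maps $f$ of degree $|f|$ into $V$ (all $x_i,y$ homogeneous in $T$), define: $d^{1}f(x_1,x_2,x_3)=(-1)^{(|f|+|x_1|)(|x_2|+|x_3|)}\theta(x_2,x_3)f(x_1)-f([x_1,x_2,x_3])+\delta(-1)^{|f|(|x_1|+|x_2|)}D(x_1,x_2)f(x_3)-\delta(-1)^{|x_2||x_3|+|f|(|x_1|+|x_3|)}\theta(x_1,x_3)f(x_2)$ for linear $f$; $d^{2}f(y,x_1,x_2,x_3)=(-1)^{(|f|+|y|+|x_1|)(|x_2|+|x_3|)}\theta(x_2,x_3)f(y,x_1)-f(y,[x_1,x_2,x_3])-\delta(-1)^{|x_2||x_3|+(|f|+|y|)(|x_1|+|x_3|)}\theta(x_1,x_3)f(y,x_2)+\delta(-1)^{(|f|+|y|)(|x_1|+|x_2|)}D(x_1,x_2)f(y,x_3)$ for bilinear $f$; $d^{3}f(x_1,\dots,x_5)=(-1)^{(|f|+|x_1|+|x_2|+|x_3|)(|x_4|+|x_5|)}\theta(x_4,x_5)f(x_1,x_2,x_3)-\delta(-1)^{(|f|+|x_1|+|x_2|)(|x_3|+|x_5|)+|x_4||x_5|}\theta(x_3,x_5)f(x_1,x_2,x_4)-\delta(-1)^{|f|(|x_1|+|x_2|)}D(x_1,x_2)f(x_3,x_4,x_5)+(-1)^{(|f|+|x_1|+|x_2|)(|x_3|+|x_4|)}D(x_3,x_4)f(x_1,x_2,x_5)+f([x_1,x_2,x_3],x_4,x_5)-f(x_1,x_2,[x_3,x_4,x_5])+(-1)^{|x_3|(|x_1|+|x_2|)}f(x_3,[x_1,x_2,x_4],x_5)+\delta(-1)^{(|x_1|+|x_2|)(|x_3|+|x_4|)}f(x_3,x_4,[x_1,x_2,x_5])$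 for trilinear $f$; $d^{4}f(y,x_1,\dots,x_5)=(-1)^{(|f|+|y|+|x_1|+|x_2|+|x_3|)(|x_4|+|x_5|)}\theta(x_4,x_5)f(y,x_1,x_2,x_3)-\delta(-1)^{(|f|+|y|+|x_1|+|x_2|)(|x_3|+|x_5|)+|x_4||x_5|}\theta(x_3,x_5)f(y,x_1,x_2,x_4)-\delta(-1)^{(|f|+|y|)(|x_1|+|x_2|)}D(x_1,x_2)f(y,x_3,x_4,x_5)+(-1)^{(|f|+|y|+|x_1|+|x_2|)(|x_3|+|x_4|)}D(x_3,x_4)f(y,x_1,x_2,x_5)+f(y,[x_1,x_2,x_3],x_4,x_5)-f(y,x_1,x_2,[x_3,x_4,x_5])+(-1)^{|x_3|(|x_1|+|x_2|)}f(y,x_3,[x_1,x_2,x_4],x_5)+\delta(-1)^{(|x_1|+|x_2|)(|x_3|+|x_4|)}f(y,x_3,x_4,[x_1,x_2,x_5])$ for 4-linear $f$. The degree of $d^nf$ is taken to be $|f|$. *)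

(* Defs.v *)
From mathcomp Require Import all_boot all_algebra.
Set Implicit Arguments. Unset Strict Implicit. Unset Printing Implicit Defensive.
Import GRing.Theory.
Local Open Scope ring_scope.

(* (-1)^b for a parity b : bool (degrees live in Z2 = bool, + is xor, * is &&) *)
Definition sgn (K : pzRingType) (b : bool) : K := if b then -1 else 1.

Definition lin1 (K : pzRingType) (U W : lmodType K) (f : U -> W) : Prop :=
  forall (k : K) (x y : U), f (k *: x + y) = k *: f x + f y.

Definition is_Z2_grading (K : pzRingType) (W : lmodType K) (W_ : bool -> {pred W}) : Prop :=
  [/\ forall i, 0 \in W_ i /\
        (forall (k : K) x y, x \in W_ i -> y \in W_ i -> k *: x + y \in W_ i),
      forall x, exists x0 x1, [/\ x0 \in W_ false, x1 \in W_ true & x = x0 + x1]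
    & forall x, x \in W_ false -> x \in W_ true -> x = 0].

Section Defs.
Variables (K : fieldType) (T V : lmodType K).
Variables (T_ : bool -> {pred T}) (V_ : bool -> {pred V}).
Variable delta : K.
Variable br : T -> T -> T -> T.
Variable theta : T -> T -> V -> V.

Definition trilinear : Prop :=
  forall a b c, [/\ lin1 (fun x => br x b c), lin1 (fun x => br a x c)
                  & lin1 (fun x => br a b x)].

Definition is_dJLSTS : Prop :=
  [/\ delta = 1 \/ delta = -1,
      is_Z2_grading T_,
      trilinear
    & forall (ia ib ic id ie : bool) a b c d e,
        a \in T_ ia -> b \in T_ ib -> c \in T_ ic -> d \in T_ id -> e \in T_ ie ->
        [/\ br a b c \in T_ (ia (+) ib (+) ic),
            br b a c = - (delta * sgn K (ia && ib)) *: br a b c,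
            sgn K (ia && ic) *: br a b c + sgn K (ib && ia) *: br b c a
              + sgn K (ic && ib) *: br c a b = 0
          & br a b (br c d e) =
              br (br a b c) d e + sgn K (ic && (ia (+) ib)) *: br c (br a b d) e
              + (delta * sgn K ((ia (+) ib) && (ic (+) id))) *: br c d (br a b e)]].

Definition Dop (ia : bool) (a : T) (ib : bool) (b : T) (v : V) : V :=
  sgn K (ia && ib) *: theta b a v - delta *: theta a b v.

Definition is_rep : Prop :=
  [/\ is_Z2_grading V_,
      forall a b, lin1 (theta a b),
      forall b (k : K) x y v, theta (k *: x + y) b v = k *: theta x b v + theta y b v,
      forall a (k : K) x y v, theta a (k *: x + y) v = k *: theta a x v + theta a y v
    & forall (ia ib ic id : bool) a b c d v,
        a \in T_ ia -> b \in T_ ib -> c \in T_ ic -> d \in T_ id ->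
        [/\
            sgn K ((ia (+) ib) && (ic (+) id)) *: theta c d (theta a b v)
              - (delta * sgn K ((ia && ib) (+) (id && (ic (+) ia)))) *: theta b d (theta a c v)
              - theta a (br b c d) v
              + sgn K (ia && (ib (+) ic)) *: Dop ib b ic c (theta a d v) = 0,
            (delta * sgn K ((ia (+) ib) && (ic (+) id))) *: theta c d (Dop ia a ib b v)
              - delta *: Dop ia a ib b (theta c d v)
              + theta (br a b c) d v
              + (delta * sgn K (ic && (ia (+) ib))) *: theta c (br a b d) v = 0
          &
            Dop (ia (+) ib (+) ic) (br a b c) id d v
              + sgn K (ic && (ia (+) ib)) *: Dop ic c (ia (+) ib (+) id) (br a b d) v
              - delta *: Dop ia a ib b (Dop ic c id d v)
              + sgn K ((ia (+) ib) && (ic (+) id)) *: Dop ic c id d (Dop ia a ib b v) = 0]].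

Definition homog_lin1 (df : bool) (f : T -> V) : Prop :=
  lin1 f /\ forall i x, x \in T_ i -> f x \in V_ (df (+) i).

Definition cochain2 (df : bool) (f : T -> T -> V) : Prop :=
  [/\ forall y, lin1 (f y),
      forall x, lin1 (fun y => f y x),
      forall i j x y, x \in T_ i -> y \in T_ j -> f x y \in V_ (df (+) i (+) j)
    & forall i j x y, x \in T_ i -> y \in T_ j ->
        f y x = - (delta * sgn K (i && j)) *: f x y].

(* Coboundaries.  Cochains are evaluated on degree-tagged arguments (i, x)
   with x homogeneous of degree i; the degree of [x1,x2,x3] is i1+i2+i3. *)
Definition d1 (f : T -> V) (df : bool) (i1 : bool) (x1 : T) (i2 : bool) (x2 : T)
  (i3 : bool) (x3 : T) : V :=
  sgn K ((df (+) i1) && (i2 (+) i3)) *: theta x2 x3 (f x1)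
  - f (br x1 x2 x3)
  + (delta * sgn K (df && (i1 (+) i2))) *: Dop i1 x1 i2 x2 (f x3)
  - (delta * sgn K ((i2 && i3) (+) (df && (i1 (+) i3)))) *: theta x1 x3 (f x2).

Definition d2 (f : T -> T -> V) (df : bool) (iy : bool) (y : T) (i1 : bool) (x1 : T)
  (i2 : bool) (x2 : T) (i3 : bool) (x3 : T) : V :=
  sgn K ((df (+) iy (+) i1) && (i2 (+) i3)) *: theta x2 x3 (f y x1)
  - f y (br x1 x2 x3)
  - (delta * sgn K ((i2 && i3) (+) ((df (+) iy) && (i1 (+) i3)))) *: theta x1 x3 (f y x2)
  + (delta * sgn K ((df (+) iy) && (i1 (+) i2))) *: Dop i1 x1 i2 x2 (f y x3).

Definition d3 (g : bool -> T -> bool -> T -> bool -> T -> V) (df : bool)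
  (i1 : bool) (x1 : T) (i2 : bool) (x2 : T) (i3 : bool) (x3 : T)
  (i4 : bool) (x4 : T) (i5 : bool) (x5 : T) : V :=
  sgn K ((df (+) i1 (+) i2 (+) i3) && (i4 (+) i5)) *: theta x4 x5 (g i1 x1 i2 x2 i3 x3)
  - (delta * sgn K (((df (+) i1 (+) i2) && (i3 (+) i5)) (+) (i4 && i5)))
      *: theta x3 x5 (g i1 x1 i2 x2 i4 x4)
  - (delta * sgn K (df && (i1 (+) i2))) *: Dop i1 x1 i2 x2 (g i3 x3 i4 x4 i5 x5)
  + sgn K ((df (+) i1 (+) i2) && (i3 (+) i4)) *: Dop i3 x3 i4 x4 (g i1 x1 i2 x2 i5 x5)
  + g (i1 (+) i2 (+) i3) (br x1 x2 x3) i4 x4 i5 x5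
  - g i1 x1 i2 x2 (i3 (+) i4 (+) i5) (br x3 x4 x5)
  + sgn K (i3 && (i1 (+) i2)) *: g i3 x3 (i1 (+) i2 (+) i4) (br x1 x2 x4) i5 x5
  + (delta * sgn K ((i1 (+) i2) && (i3 (+) i4)))
      *: g i3 x3 i4 x4 (i1 (+) i2 (+) i5) (br x1 x2 x5).

Definition d4 (g : bool -> T -> bool -> T -> bool -> T -> bool -> T -> V) (df : bool)
  (iy : bool) (y : T)
  (i1 : bool) (x1 : T) (i2 : bool) (x2 : T) (i3 : bool) (x3 : T)
  (i4 : bool) (x4 : T) (i5 : bool) (x5 : T) : V :=
  sgn K ((df (+) iy (+) i1 (+) i2 (+) i3) && (i4 (+) i5))
      *: theta x4 x5 (g iy y i1 x1 i2 x2 i3 x3)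
  - (delta * sgn K (((df (+) iy (+) i1 (+) i2) && (i3 (+) i5)) (+) (i4 && i5)))
      *: theta x3 x5 (g iy y i1 x1 i2 x2 i4 x4)
  - (delta * sgn K ((df (+) iy) && (i1 (+) i2))) *: Dop i1 x1 i2 x2 (g iy y i3 x3 i4 x4 i5 x5)
  + sgn K ((df (+) iy (+) i1 (+) i2) && (i3 (+) i4))
      *: Dop i3 x3 i4 x4 (g iy y i1 x1 i2 x2 i5 x5)
  + g iy y (i1 (+) i2 (+) i3) (br x1 x2 x3) i4 x4 i5 x5
  - g iy y i1 x1 i2 x2 (i3 (+) i4 (+) i5) (br x3 x4 x5)
  + sgn K (i3 && (i1 (+) i2)) *: g iy y i3 x3 (i1 (+) i2 (+) i4) (br x1 x2 x4) i5 x5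
  + (delta * sgn K ((i1 (+) i2) && (i3 (+) i4)))
      *: g iy y i3 x3 i4 x4 (i1 (+) i2 (+) i5) (br x1 x2 x5).

End Defs.

(* Main.v *)
Require Import Defs.
From mathcomp Require Import all_boot all_algebra.
Set Implicit Arguments. Unset Strict Implicit. Unset Printing Implicit Defensive.
Import GRing.Theory.
Local Open Scope ring_scope.

Inductive sx := SSgn of bool | SOne | SMul of sx & sx | SOpp of sx.
Inductive lx := LAt of nat | LAdd of lx & lx | LOpp of lx | LSc of sx & lx | LZero.

Fixpoint cfS s : int := match s with
 | SSgn b => sgn int b | SOne => 1 | SMul a b => cfS a * cfS b | SOpp a => - cfS a end.
Fixpoint cf e (n : nat) : int := match e with
 | LAt m => if m == n then 1 else 0
 | LAdd a b => cf a n + cf b n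
 | LOpp a => - cf a n
 | LSc s a => cfS s * cf a n
 | LZero => 0 end.

Section Refl.
Variables (K : fieldType) (V : lmodType K).
Fixpoint evS s : K := match s with
 | SSgn b => sgn K b | SOne => 1 | SMul a b => evS a * evS b | SOpp a => - evS a end.
Fixpoint ev (env : seq V) e : V := match e with
 | LAt n => nth 0 env n
 | LAdd a b => ev env a + ev env b
 | LOpp a => - ev env a
 | LSc s a => evS s *: ev env a
 | LZero => 0 end.

Lemma evS_int s : evS s = (cfS s)%:~R.
Proof.
elim: s => [b||a IHa c IHc|a IHa] /=.
- by case: b => /=; rewrite ?intrN.
- by [].
- by rewrite IHa IHc intrM.
- by rewrite IHa intrN.
Qed.

Lemma ev_sum env e : ev env e = \sum_(i < size env) (cf e i)%:~R *: env`_i.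
Proof.
elim: e => [m|a IHa c IHc|a IHa|s a IHa|] /=.
- case: (ltnP m (size env)) => hm.
    rewrite (bigD1 (Ordinal hm)) //= eqxx scale1r big1 ?addr0 // => i hi.
    have -> : (m == i) = false.
      by apply/negbTE; apply: contra hi => /eqP hmi; apply/eqP/val_inj => /=.
    by rewrite scale0r.
  rewrite nth_default // big1 // => i _.
  have -> : (m == i) = false.
    by apply/negbTE; apply/eqP => hmi; move: (ltn_ord i); rewrite -hmi ltnNge hm.
  by rewrite scale0r.
- by rewrite IHa IHc -big_split /=; apply: eq_bigr => i _; rewrite intrD scalerDl.
- by rewrite IHa -sumrN; apply: eq_bigr => i _; rewrite intrN scaleNr.
- rewrite IHa scaler_sumr; apply: eq_bigr => i _.
  by rewrite scalerA evS_int intrM.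
- by rewrite big1 // => i _; rewrite scale0r.
Qed.

Lemma ev_eq env n e1 e2 : size env = n ->
  all (fun i => cf e1 i == cf e2 i) (iota 0 n) -> ev env e1 = ev env e2.
Proof.
move=> <- /allP h; rewrite !ev_sum; apply: eq_bigr => i _.
have hi : (val i \in iota 0 (size env)) by rewrite mem_iota /=.
by rewrite (eqP (h i hi)).
Qed.
End Refl.

Ltac reifS s := lazymatch s with
 | sgn _ ?b => constr:(SSgn b)
 | @GRing.one _ => constr:(SOne)
 | @GRing.mul _ ?x ?y => let a := reifS x in let c := reifS y in constr:(SMul a c)
 | @GRing.opp _ ?x => let a := reifS x in constr:(SOpp a)
end.
Ltac memb x l := lazymatch l with
 | @nil _ => constr:(false)
 | @cons _ x _ => constr:(true)
 | @cons _ _ ?l' => memb x l'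
end.
Ltac idx x l := lazymatch l with
 | @cons _ x _ => constr:(0%N)
 | @cons _ _ ?l' => let n := idx x l' in constr:(S n)
end.
Ltac collect t l := lazymatch t with
 | @GRing.add _ ?a ?b => let l1 := collect a l in collect b l1
 | @GRing.opp _ ?a => collect a l
 | @GRing.scale _ _ _ ?a => collect a l
 | @GRing.zero _ => l
 | _ => let m := memb t l in lazymatch m with true => l | false => constr:(t :: l) end
end.
Ltac reif t l := lazymatch t with
 | @GRing.add _ ?a ?b => let x := reif a l in let y := reif b l in constr:(LAdd x y)
 | @GRing.opp _ ?a => let x := reif a l in constr:(LOpp x)
 | @GRing.scale _ _ ?k ?a => let s := reifS k in let x := reif a l in constr:(LSc s x)
 | @GRing.zero _ => constr:(LZero)
 | _ => let n := idx t l in constr:(LAt n)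
end.
Ltac reflect_lmod K V :=
  lazymatch goal with |- ?L = ?R =>
    let l0 := collect L (@nil V) in
    let l := collect R l0 in
    let e1 := reif L l in
    let e2 := reif R l in
    let n := eval cbv [size] in (size l) in
    change (@ev K V l e1 = @ev K V l e2);
    apply: (@ev_eq K V l n e1 e2 erefl)
  end.


Section Lin.
Variables (K : fieldType) (U W : lmodType K) (f : U -> W).
Hypothesis hf : lin1 f.
Lemma lin0 : f 0 = 0.
Proof.
have := hf 1 0 0; rewrite !scale1r addr0 => h.
by apply: (@addrI _ (f 0)); rewrite addr0 -h.
Qed.
Lemma linD x y : f (x + y) = f x + f y.
Proof. by have := hf 1 x y; rewrite !scale1r. Qed.
Lemma linZ k x : f (k *: x) = k *: f x.
Proof. by have := hf k x 0; rewrite !addr0 lin0 addr0. Qed.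
Lemma linN x : f (- x) = - f x.
Proof. by rewrite -scaleN1r linZ scaleN1r. Qed.
End Lin.

Lemma comb0 (K : fieldType) (V : lmodType K) (x A1 A2 A3 A4 A5 A6 : V)
  (c1 c2 c3 c4 c5 : K) : A1 = 0 -> A2 = 0 -> A3 = 0 -> A4 = 0 -> A5 = 0 -> A6 = 0 ->
  x = c1 *: A1 + c2 *: A2 + c3 *: A3 + c4 *: A4 + c5 *: A5 + A6 -> x = 0.
Proof. by move=> -> -> -> -> -> -> ->; rewrite !scaler0 !addr0. Qed.

Lemma part1 (K : fieldType) (T V : lmodType K)
  (T_ : bool -> {pred T}) (V_ : bool -> {pred V}) (delta : K)
  (br : T -> T -> T -> T) (theta : T -> T -> V -> V) :
  is_dJLSTS T_ delta br ->
  is_rep T_ V_ delta br theta ->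
  forall (f : T -> V) (df : bool), lin1 f ->
     forall (i1 i2 i3 i4 i5 : bool) (x1 x2 x3 x4 x5 : T),
       x1 \in T_ i1 -> x2 \in T_ i2 -> x3 \in T_ i3 -> x4 \in T_ i4 -> x5 \in T_ i5 ->
       d3 delta br theta (d1 delta br theta f df) df i1 x1 i2 x2 i3 x3 i4 x4 i5 x5 = 0.
Proof.
case=> hdel _ _ hT [_ hlin _ _ hR] f df hf i1 i2 i3 i4 i5 x1 x2 x3 x4 x5 h1 h2 h3 h4 h5.
have [_ _ _ FI] := hT _ _ _ _ _ _ _ _ _ _ h1 h2 h3 h4 h5.
have [A1 _ _] := hR _ _ _ _ _ _ _ _ (f x1) h2 h3 h4 h5.
have [A2 _ _] := hR _ _ _ _ _ _ _ _ (f x2) h1 h3 h4 h5.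
have [_ A3 _] := hR _ _ _ _ _ _ _ _ (f x3) h1 h2 h4 h5.
have [_ A4 _] := hR _ _ _ _ _ _ _ _ (f x4) h1 h2 h3 h5.
have [_ _ A5] := hR _ _ _ _ _ _ _ _ (f x5) h1 h2 h3 h4.
have A6 := congr1 f FI.
rewrite !(linD hf) !(linZ hf) in A6.
move/eqP: A6; rewrite -subr_eq0 => /eqP A6.
apply: (comb0
  (c1 := sgn K ((df (+) i1) && (i2 (+) i3 (+) i4 (+) i5)))
  (c2 := - (delta * sgn K ((i2 && (i3 (+) i4 (+) i5)) (+) (df && (i1 (+) i3 (+) i4 (+) i5)))))
  (c3 := sgn K ((i3 && (i4 (+) i5)) (+) (df && (i1 (+) i2 (+) i4 (+) i5))))
  (c4 := - (delta * sgn K ((i4 && i5) (+) (df && (i1 (+) i2 (+) i3 (+) i5)))))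
  (c5 := delta * sgn K (df && (i1 (+) i2 (+) i3 (+) i4)))
  A1 A2 A3 A4 A5 A6).
have thD a b := linD (hlin a b).
have thZ a b := linZ (hlin a b).
have thN a b := linN (hlin a b).
rewrite /d3 /d1 /Dop !(thD, thZ, thN).
case: hdel => ?; subst delta; reflect_lmod K V; clear -df i1 i2 i3 i4 i5;
  by case: df; case: i1; case: i2; case: i3; case: i4; case: i5; vm_compute.
Qed.

Lemma d2_d1 (K : fieldType) (T V : lmodType K) (delta : K)
  (br : T -> T -> T -> T) (theta : T -> T -> V -> V) (f : T -> T -> V) df iy y
  i1 x1 i2 x2 i3 x3 :
  d2 delta br theta f df iy y i1 x1 i2 x2 i3 x3
  = d1 delta br theta (f y) (df (+) iy) i1 x1 i2 x2 i3 x3.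
Proof. by rewrite /d2 /d1 [RHS]addrAC. Qed.

Lemma d4_d3 (K : fieldType) (T V : lmodType K) (delta : K)
  (br : T -> T -> T -> T) (theta : T -> T -> V -> V) (f : T -> T -> V) df iy y
  i1 x1 i2 x2 i3 x3 i4 x4 i5 x5 :
  d4 delta br theta (d2 delta br theta f df) df iy y i1 x1 i2 x2 i3 x3 i4 x4 i5 x5
  = d3 delta br theta (d1 delta br theta (f y) (df (+) iy)) (df (+) iy)
       i1 x1 i2 x2 i3 x3 i4 x4 i5 x5.
Proof. by rewrite /d4 /d3 !d2_d1. Qed.

Theorem theorem3p7 (K : fieldType) (T V : lmodType K)
  (T_ : bool -> {pred T}) (V_ : bool -> {pred V}) (delta : K)
  (br : T -> T -> T -> T) (theta : T -> T -> V -> V) :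
  is_dJLSTS T_ delta br ->
  is_rep T_ V_ delta br theta ->
  (forall (f : T -> V) (df : bool), homog_lin1 T_ V_ df f ->
     forall (i1 i2 i3 i4 i5 : bool) (x1 x2 x3 x4 x5 : T),
       x1 \in T_ i1 -> x2 \in T_ i2 -> x3 \in T_ i3 -> x4 \in T_ i4 -> x5 \in T_ i5 ->
       d3 delta br theta (d1 delta br theta f df) df i1 x1 i2 x2 i3 x3 i4 x4 i5 x5 = 0)
  /\
  (forall (f : T -> T -> V) (df : bool), cochain2 T_ V_ delta df f ->
     forall (iy i1 i2 i3 i4 i5 : bool) (y x1 x2 x3 x4 x5 : T),
       y \in T_ iy ->
       x1 \in T_ i1 -> x2 \in T_ i2 -> x3 \in T_ i3 -> x4 \in T_ i4 -> x5 \in T_ i5 ->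
       d4 delta br theta (d2 delta br theta f df) df iy y i1 x1 i2 x2 i3 x3 i4 x4 i5 x5 = 0).
Proof.
move=> hT hR; split.
- move=> f df [hf _]; exact: (part1 hT hR df hf).
- move=> f df [hf _ _ _] iy i1 i2 i3 i4 i5 y x1 x2 x3 x4 x5 _.
  rewrite d4_d3; exact: (part1 hT hR (df (+) iy) (hf y)).
Qed.
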